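(* Let $h=H(s::a::b)$ and $\Upsilon\subseteq\{z,z\boxplus h\}$. Then $$G(\vdash x\boxplus h)_\ell=G(x,z\vdash x\boxplus h)_\ell=2^{-\ell},\qquad G(a,b,s,x^{\circledast\kappa h}\vdash x\boxplus h)=1,\qquad G(a,b,s,x,\Upsilon\vdash x\boxplus h)=1.$$
   Context: Hancke–Kuhn setting with security parameter $\ell$: secret $s$, counters $a,b$, public hash $H$ modeled as a random oracle (outputs indistinguishable from uniformly random, independent on distinct inputs), token $h=H(s::a::b)=h^{(0)}::h^{(1)}\in\mathbb{Z}_2^{2\ell}$; $x\in\mathbb{Z}_2^\ell$ is Victor's uniformly random challenge and $z\in\mathbb{Z}_2^\ell$ an attacker's challenge chosen independently of $x$. $(x\boxplus h)_i=h^{(x_i)}_i$. Kernel $\kappa h=\{i\mid h^{(0)}_i=h^{(1)}_i\}$; $x^{\circledast I}$ replaces bits $x_i$, $i\in I$, by a wildcard. $G(\Xi\vdash\Theta)$ is the guessing chance: maximal probability over randomized guessing procedures of outputting $\Theta$ on input $\Xi$, over the random values, as a sequence in $\ell$ considered up to negligible difference; $G(\vdash\Theta)=G(\emptyset\vdash\Theta)$. *)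

(* Defs.v *)
From mathcomp Require Import all_boot all_order all_algebra.
Set Implicit Arguments. Unset Strict Implicit. Unset Printing Implicit Defensive.
Import Order.TTheory GRing.Theory Num.Theory.
Local Open Scope ring_scope.

Definition bits (l : nat) := {ffun 'I_l -> bool}.

(* Tokens h in Z_2^(2l), h = h^(0) :: h^(1) (first half, second half). *)
Definition token (l : nat) := {ffun 'I_(l + l) -> bool}.

Definition hpart (l : nat) (h : token l) (c : bool) (i : 'I_l) : bool :=
  if c then h (rshift l i) else h (lshift l i).

Definition boxplus (l : nat) (x : bits l) (h : token l) : bits l :=
  [ffun i => hpart h (x i) i].

Definition kernel (l : nat) (h : token l) : {set 'I_l} :=
  [set i | hpart h false i == hpart h true i].

(* x^{circledast I}: bits with index in I replaced by a wildcard (None). *)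
Definition wildcard (l : nat) (x : bits l) (I : {set 'I_l}) : {ffun 'I_l -> option bool} :=
  [ffun i => if i \in I then None else Some (x i)].

Definition is_distr (R : numDomainType) (T : finType) (P : T -> R) :=
  (forall w, 0 <= P w) /\ \sum_w P w = 1.

Definition prob (R : numDomainType) (T : finType) (P : T -> R) (E : pred T) : R :=
  \sum_(w | E w) P w.

Definition rguesser (R : numDomainType) (I O : finType) (g : I -> O -> R) :=
  forall i, is_distr (g i).

Definition success (R : numDomainType) (T I O : finType) (P : T -> R)
  (X : T -> I) (Y : T -> O) (g : I -> O -> R) : R :=
  \sum_w P w * g (X w) (Y w).

(* G(X |- Y) = v : the maximal success probability over randomized guessing
   procedures is v (attained, and an upper bound). *)
Definition guess_chance_is (R : numDomainType) (T I O : finType) (P : T -> R)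
  (X : T -> I) (Y : T -> O) (v : R) :=
  (exists2 g, rguesser g & success P X Y g = v) /\
  (forall g, rguesser g -> success P X Y g <= v).

(* Main.v *)
Require Import Defs.
From mathcomp Require Import all_boot all_order all_algebra.
Import Order.TTheory GRing.Theory Num.Theory.
Local Open Scope ring_scope.
Set Implicit Arguments. Unset Strict Implicit. Unset Printing Implicit Defensive.

Lemma part_sum (R : numDomainType) (T I : finType) (X : T -> I) (E : pred T) (F : T -> R) :
  \sum_(w | E w) F w = \sum_i \sum_(w | (X w == i) && E w) F w.
Proof.
rewrite (partition_big X predT) //=; apply: eq_bigr => i _; apply: eq_bigl => w.
by rewrite andbC.
Qed.

Lemma prob_part (R : numDomainType) (T I : finType) (P : T -> R) (X : T -> I) (E : pred T) :
  prob P E = \sum_i prob P (fun w => (X w == i) && E w).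
Proof. exact: part_sum. Qed.

Lemma success_const (R : numDomainType) (T I O : finType) (P : T -> R)
  (X : T -> I) (Y : T -> O) (c : R) g :
  is_distr P -> rguesser g ->
  (forall i o, prob P (fun w => (X w == i) && (Y w == o)) = c * prob P (fun w => X w == i)) ->
  success P X Y g = c.
Proof.
move=> [P0 P1] Hg Hc.
have E : success P X Y g = \sum_i \sum_o g i o * prob P (fun w => (X w == i) && (Y w == o)).
  rewrite /success (part_sum X predT); apply: eq_bigr => i _.
  rewrite (part_sum Y); apply: eq_bigr => o _.
  rewrite /prob big_distrr /=; apply: eq_big => w; first by rewrite andbT andbC.
  by case/and3P => /eqP -> /eqP -> _; rewrite mulrC.
rewrite E (eq_bigr (fun i => c * prob P (fun w => X w == i))).
  rewrite -big_distrr /=.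
  have -> : \sum_i prob P (fun w => X w == i) = 1.
    rewrite -P1 (part_sum X predT P); apply: eq_bigr => i _.
    by apply: eq_bigl => w; rewrite andbT.
  by rewrite mulr1.
move=> i _; rewrite (eq_bigr (fun o => (c * prob P (fun w => X w == i)) * g i o)).
  by rewrite -big_distrr /= (proj2 (Hg i)) mulr1.
by move=> o _; rewrite Hc mulrC.
Qed.

Lemma guess_le1 (R : numDomainType) (I O : finType) (g : I -> O -> R) i o :
  rguesser g -> g i o <= 1.
Proof.
move=> Hg; case: (Hg i) => H0 H1; rewrite -H1 (bigD1 o) //= lerDl.
by apply: sumr_ge0 => ? _.
Qed.

Lemma success_le1 (R : numDomainType) (T I O : finType) (P : T -> R)
  (X : T -> I) (Y : T -> O) g :
  is_distr P -> rguesser g -> success P X Y g <= 1.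
Proof.
move=> [P0 P1] Hg; rewrite -P1 /success; apply: ler_sum => w _.
by rewrite -[leRHS]mulr1 ler_wpM2l // guess_le1.
Qed.

Definition det (I O : finType) (f : I -> O) (R : numDomainType) : I -> O -> R :=
  fun i o => if o == f i then 1 else 0.

Lemma det_rg (R : numDomainType) (I O : finType) (f : I -> O) : rguesser (det f R).
Proof.
move=> i; split; first by move=> o; rewrite /det; case: ifP.
by rewrite /det -big_mkcond /= big_pred1_eq.
Qed.

Lemma chance1 (R : numDomainType) (T I O : finType) (P : T -> R)
  (X : T -> I) (Y : T -> O) (f : I -> O) :
  is_distr P -> (forall w, f (X w) = Y w) -> guess_chance_is P X Y 1.
Proof.
move=> HP Hf; split; last by move=> g Hg; exact: success_le1.
exists (det f R); first exact: det_rg.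
case: HP => _ P1; rewrite -P1 /success; apply: eq_bigr => w _.
by rewrite /det Hf eqxx mulr1.
Qed.

Definition t_of (l : nat) (u o y : bits l) : token l :=
  [ffun k => match split k with inl i => if u i then y i else o i
                              | inr i => if u i then o i else y i end].

Lemma splitL (l : nat) (i : 'I_l) : split (lshift l i) = inl i.
Proof. exact: (unsplitK (inl i)). Qed.
Lemma splitR (l : nat) (i : 'I_l) : split (rshift l i) = inr i.
Proof. exact: (unsplitK (inr i)). Qed.

Lemma card_box (l : nat) (u o : bits l) :
  #|[set t : token l | boxplus u t == o]| = (2 ^ l)%N.
Proof.
have -> : [set t : token l | boxplus u t == o] = [set t_of u o y | y in [set: bits l]].
  apply/setP => t; rewrite inE; apply/eqP/imsetP.
    move=> Ht; exists [ffun i => hpart t (~~ u i) i]; first by rewrite inE.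
    apply/ffunP => k; rewrite -(splitK k); case: (split k) => i /=;
      rewrite !ffunE ?splitL ?splitR -Ht !ffunE /hpart; by case: (u i).
  case=> y _ ->; apply/ffunP => i; rewrite !ffunE /hpart.
  by case E: (u i); rewrite ffunE ?splitL ?splitR E.
rewrite card_imset; first by rewrite cardsT card_ffun card_bool card_ord.
move=> y1 y2 E; apply/ffunP => i.
have := congr1 (fun t : token l => hpart t (~~ u i) i) E.
rewrite /hpart; case E': (u i) => /=; rewrite !ffunE ?splitL ?splitR E' //.
Qed.

Lemma prob_tot (R : numDomainType) (T I : finType) (P : T -> R) (X : T -> I) :
  is_distr P -> \sum_i prob P (fun w => X w == i) = 1.
Proof.
case=> _ P1; rewrite -P1 (part_sum X predT P); apply: eq_bigr => i _.
by apply: eq_bigl => w; rewrite andbT.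
Qed.

Lemma chance_const (R : numDomainType) (T I O : finType) (P : T -> R)
  (X : T -> I) (Y : T -> O) (c : R) (o0 : O) :
  is_distr P ->
  (forall i o, prob P (fun w => (X w == i) && (Y w == o)) = c * prob P (fun w => X w == i)) ->
  guess_chance_is P X Y c.
Proof.
move=> HP Hc; split.
  exists (det (fun _ : I => o0) R); first exact: det_rg.
  by apply: success_const => //; exact: det_rg.
by move=> g Hg; rewrite (success_const HP Hg Hc).
Qed.

Theorem lemma6p3 (R : realFieldType) (l : nat) (S A B : finType)
  (H : S -> A -> B -> token l)
  (Omega : finType) (P : Omega -> R)
  (s : Omega -> S) (a : Omega -> A) (b : Omega -> B) (x z : Omega -> bits l)
  (in_z in_zh : bool) :
  let h := fun w => H (s w) (a w) (b w) in
  is_distr P ->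
  (* Victor's challenge x is uniformly random *)
  (forall u, prob P (fun w => x w == u) = 2 ^- l) ->
  (* the attacker's challenge z is independent of x *)
  (forall u v, prob P (fun w => (x w == u) && (z w == v))
               = prob P (fun w => x w == u) * prob P (fun w => z w == v)) ->
  (* random oracle: h = H(s::a::b) is uniform and independent of (x, z) *)
  (forall t u v, prob P (fun w => [&& h w == t, x w == u & z w == v])
               = 2 ^- (l + l) * prob P (fun w => (x w == u) && (z w == v))) ->
  let Y := fun w => boxplus (x w) (h w) in
  (* Upsilon, a subset of {z, z [+] h} *)
  let Ups := fun w => (if in_z then Some (z w) else None,
                       if in_zh then Some (boxplus (z w) (h w)) else None) in
  [/\ guess_chance_is P (fun _ => tt) Y (2 ^- l),
      guess_chance_is P (fun w => (x w, z w)) Y (2 ^- l),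
      guess_chance_is P (fun w => (a w, b w, s w, wildcard (x w) (kernel (h w)))) Y 1
    & guess_chance_is P (fun w => (a w, b w, s w, x w, Ups w)) Y 1].
Proof.
move=> h HP Hx Hxz Hh Y Ups.
pose o0 : bits l := [ffun _ => false].
have F : forall i o, prob P (fun w => ((x w, z w) == i) && (Y w == o))
                     = 2 ^- l * prob P (fun w => (x w, z w) == i).
  case=> u v o.
  rewrite (prob_part P h).
  rewrite (eq_bigr (fun t => if boxplus u t == o then
               2 ^- (l + l) * prob P (fun w => (x w == u) && (z w == v)) else 0)).
    rewrite -big_mkcond /=.
    rewrite (eq_bigl (fun t => t \in [set t : token l | boxplus u t == o])); last first.
      by move=> t; rewrite inE.
    rewrite sumr_const card_box -(mulr_natl (_ * _) (2 ^ l)) natrX exprD invfM mulrA mulrA mulfV.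
      rewrite mul1r /prob; congr (_ * _); apply: eq_bigl => w; by rewrite xpair_eqE.
    by rewrite expf_neq0 // pnatr_eq0.
  move=> t _; case: ifP => Et.
    rewrite -(Hh t u v) /prob; apply: eq_bigl => w; rewrite xpair_eqE /Y.
    by case: (h w =P t) => //= ->; case: (x w =P u) => //= ->; rewrite Et andbT.
  rewrite /prob big_pred0 // => w; rewrite xpair_eqE /Y.
  case: (h w =P t) => //= ->; case: (x w =P u) => //= ->.
  by rewrite Et andbF.
split.
- apply: (@chance_const _ _ _ _ P _ Y _ o0 HP) => -[] o.
  rewrite [X in _ = _ * X](_ : _ = 1); last first.
    by case: HP => _ <-; rewrite /prob; apply: eq_bigl.
  rewrite mulr1 (prob_part P (fun w => (x w, z w))).
  rewrite (eq_bigr (fun i => 2 ^- l * prob P (fun w => (x w, z w) == i))).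
    by rewrite -big_distrr /= prob_tot // mulr1.
  move=> i _; rewrite -(F i o); rewrite /prob; apply: eq_bigl => w.
  by [].
- exact: (@chance_const _ _ _ _ P _ Y _ o0 HP).
- refine (@chance1 _ _ _ _ P (fun w => (a w, b w, s w, wildcard (x w) (kernel (h w)))) Y (fun i => [ffun j => hpart (H i.1.2 i.1.1.1 i.1.1.2) (odflt false (i.2 j)) j] : bits l) HP _) => w.
  apply/ffunP => j; rewrite /Y /boxplus /wildcard /= !ffunE.
  rewrite -/(h w); case: ifP => // Hk; move: Hk; rewrite /kernel inE => /eqP Hk /=.
  by case: (x w j).
- by apply: (@chance1 _ _ _ _ P _ Y (fun i => let: (a', b', s', x', _) := i in
      boxplus x' (H s' a' b')) HP).
Qed.
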